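(* Every relation that is a delta matroid and belongs to IM-conj is basically binary.
   Context: A relation $R\subseteq\{0,1\}^V$ is a delta matroid if for all $x,y\in R$ and all $i$ with $x_i\ne y_i$ there exists $j$ with $x_j\ne y_j$ (possibly $j=i$) such that the configuration obtained from $x$ by flipping coordinates $i$ and $j$ lies in $R$. IM-conj is the class of relations expressible as a conjunction of implications $x_i\le x_j$ and pins $x_i=c$ ($c\in\{0,1\}$). A relation is basically binary if it is equivalent (up to renaming variables) to a Cartesian product of relations of arity at most two. *)

(* Defs.v *)
From HB Require Import structures.
From mathcomp Require Import all_boot.
Set Implicit Arguments. Unset Strict Implicit. Unset Printing Implicit Defensive.

Definition config (V : finType) := {ffun V -> bool}.
Definition relation (V : finType) := {set config V}.

(* x with the coordinates in {i, j} flipped (when j = i, only i is flipped),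
   i.e. the symmetric difference x Δ {i, j}. *)
Definition flip2 (V : finType) (x : config V) (i j : V) : config V :=
  [ffun k => if (k == i) || (k == j) then ~~ x k else x k].

Definition delta_matroid (V : finType) (R : relation V) : Prop :=
  forall x y, x \in R -> y \in R -> forall i, x i != y i ->
    exists j, x j != y j /\ flip2 x i j \in R.

Inductive im_atom (V : Type) :=
| Imp of V & V
| Pin of V & bool.

Definition sat_atom (V : finType) (x : config V) (a : im_atom V) : bool :=
  match a with
  | Imp i j => x i <= x j
  | Pin i c => x i == c
  end.

Definition IM_conj (V : finType) (R : relation V) : Prop :=
  exists cs : seq (im_atom V), forall x, (x \in R) = all (sat_atom x) cs.

Definition depends_only_on (V : finType) (S : relation V) (B : {set V}) : Prop :=
  forall x y : config V, (forall v, v \in B -> x v = y v) -> (x \in S) = (y \in S).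

(* R is basically binary: V is partitioned into blocks of size at most two
   (blocks given as a list; each variable lies in exactly one block), and R is
   the Cartesian product of relations S_B, each on its block B. *)
Definition basically_binary (V : finType) (R : relation V) : Prop :=
  exists bs : seq ({set V} * relation V),
    (forall b, b \in bs -> #|b.1| <= 2 /\ depends_only_on b.2 b.1) /\
    (forall v : V, count (fun b : {set V} * relation V => v \in b.1) bs = 1) /\
    (forall x, (x \in R) = all (fun b : {set V} * relation V => x \in b.2) bs).

(* Main.v *)
Require Import Defs.
From mathcomp Require Import all_boot.
Set Implicit Arguments. Unset Strict Implicit. Unset Printing Implicit Defensive.

Definition cmeet (V : finType) (x y : config V) : config V := [ffun k => x k && y k].
Definition cjoin (V : finType) (x y : config V) : config V := [ffun k => x k || y k].

Lemma all3 (T : Type) (a b c : pred T) s :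
  (forall t, a t -> b t -> c t) -> all a s -> all b s -> all c s.
Proof. move=> h; elim: s => //= t s IH /andP[at1 as1] /andP[bt bs]. by rewrite h // IH. Qed.

Lemma im_meet (V : finType) (R : relation V) : IM_conj R ->
  forall x y, x \in R -> y \in R -> cmeet x y \in R.
Proof.
case=> cs H x y; rewrite !H; apply: all3 => a.
case: a => [i j|i c] /=; rewrite !ffunE.
  by case: (x i); case: (x j); case: (y i); case: (y j).
by case: (x i); case: (y i); case: c.
Qed.

Lemma im_join (V : finType) (R : relation V) : IM_conj R ->
  forall x y, x \in R -> y \in R -> cjoin x y \in R.
Proof.
case=> cs H x y; rewrite !H; apply: all3 => a.
case: a => [i j|i c] /=; rewrite !ffunE.
  by case: (x i); case: (x j); case: (y i); case: (y j).
by case: (x i); case: (y i); case: c.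
Qed.

Lemma meet_ex (V : finType) (R : relation V)
  (HM : forall x y, x \in R -> y \in R -> cmeet x y \in R)
  (S : {set config V}) x0 : x0 \in S -> S \subset R ->
  exists2 z, z \in R & forall k, z k = [forall y in S, y k].
Proof.
move=> x0S /subsetP SR.
have IN : forall s, all (fun y => y \in R) s -> foldr (@cmeet V) x0 s \in R.
  elim=> [|a s IH] /=; first by move=> _; apply: SR.
  by case/andP=> aR sR; apply: HM => //; apply: IH.
have E : forall s k, foldr (@cmeet V) x0 s k = x0 k && all (fun y : config V => y k) s.
  elim=> [|a s IH] k /=; first by rewrite andbT.
  by rewrite ffunE IH andbCA.
exists (foldr (@cmeet V) x0 (enum S)).
  by apply: IN; apply/allP => y; rewrite mem_enum; apply: SR.
move=> k; rewrite E; apply/idP/idP.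
  case/andP=> _ /allP h; apply/forall_inP => y yS; apply: h; by rewrite mem_enum.
move/forall_inP=> h; rewrite (h _ x0S) /=; apply/allP => y; rewrite mem_enum; exact: h.
Qed.

Lemma join_ex (V : finType) (R : relation V)
  (HJ : forall x y, x \in R -> y \in R -> cjoin x y \in R)
  (S : {set config V}) x0 : x0 \in S -> S \subset R ->
  exists2 z, z \in R & forall k, z k = [exists y in S, y k].
Proof.
move=> x0S /subsetP SR.
have IN : forall s, all (fun y => y \in R) s -> foldr (@cjoin V) x0 s \in R.
  elim=> [|a s IH] /=; first by move=> _; apply: SR.
  by case/andP=> aR sR; apply: HJ => //; apply: IH.
have E : forall s k, foldr (@cjoin V) x0 s k = x0 k || has (fun y : config V => y k) s.
  elim=> [|a s IH] k /=; first by rewrite orbF.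
  by rewrite ffunE IH orbCA.
exists (foldr (@cjoin V) x0 (enum S)).
  by apply: IN; apply/allP => y; rewrite mem_enum; apply: SR.
move=> k; rewrite E; apply/idP/idP.
  case/orP=> [h|/hasP [y yS yk]]; apply/exists_inP; first by exists x0.
  by exists y; rewrite // -mem_enum.
case/exists_inP=> y yS yk; apply/orP; right; apply/hasP; exists y => //; by rewrite mem_enum.
Qed.

Definition arrb (V : finType) (R : relation V) (u v : V) : bool :=
  [&& u != v, [forall x in R, x u ==> x v], [exists x in R, ~~ x v] & [exists x in R, x u]].

Lemma arrA (V : finType) (R : relation V) : delta_matroid R ->
  (forall x y, x \in R -> y \in R -> cmeet x y \in R) ->
  forall u j k, arrb R u j -> arrb R u k -> j = k.
Proof.
move=> DM HM u j k.
case/and4P=> Huj /forall_inP Ij /exists_inP[x1 Hx1 Hnj] /exists_inP[w Hw Hwu].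
case/and4P=> Huk /forall_inP Ik /exists_inP[x2 Hx2 Hnk] _.
have [m Hm mE] := meet_ex HM Hx1 (subxx R).
have mle y k' : y \in R -> m k' -> y k' by move=> Hy; rewrite mE => /forall_inP; apply.
have mj : m j = false by apply: contraNF (mle _ _ Hx1) Hnj.
have mk : m k = false by apply: contraNF (mle _ _ Hx2) Hnk.
have mu : m u = false by move: (Ij m Hm); rewrite mj; case: (m u).
have [l [Hl Hf]] := DM m w Hm Hw u (ltac:(by rewrite mu Hwu)).
have fu : flip2 m u l u by rewrite /flip2 ffunE eqxx mu.
have := Ij _ Hf; have := Ik _ Hf; rewrite fu /= /flip2 !ffunE mj mk.
have hju : (j == u) = false by rewrite eq_sym (negbTE Huj).
have hku : (k == u) = false by rewrite eq_sym (negbTE Huk).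
rewrite hju hku /=.
case: (k =P l) => [->|] //; by case: (j =P l).
Qed.

Lemma arrB (V : finType) (R : relation V) : delta_matroid R ->
  (forall x y, x \in R -> y \in R -> cjoin x y \in R) ->
  forall u w j, arrb R u j -> arrb R w j -> u = w.
Proof.
move=> DM HJ u w j.
case/and4P=> Huj /forall_inP Iu /exists_inP[x1 Hx1 Hnj] /exists_inP[y1 Hy1 Hu].
case/and4P=> Hwj /forall_inP Iw _ /exists_inP[y2 Hy2 Hw].
have [M HMR ME] := join_ex HJ Hx1 (subxx R).
have Mge y k' : y \in R -> y k' -> M k' by move=> Hy yk; rewrite ME; apply/exists_inP; exists y.
have Mu : M u := Mge _ _ Hy1 Hu.
have Mw : M w := Mge _ _ Hy2 Hw.
have Mj : M j by move: (Iu M HMR); rewrite Mu.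
have x1u : x1 u = false by move: (Iu x1 Hx1); rewrite (negbTE Hnj); case: (x1 u).
have [l [Hl Hf]] := DM M x1 HMR Hx1 j (ltac:(by rewrite Mj (negbTE Hnj))).
have fj : flip2 M j l j = false by rewrite /flip2 ffunE eqxx Mj.
have := Iu _ Hf; have := Iw _ Hf; rewrite fj /flip2 !ffunE Mu Mw.
rewrite (negbTE Huj) (negbTE Hwj) /=.
case: (w =P l) => [->|] //; by case: (u =P l).
Qed.

Lemma arrC (V : finType) (R : relation V) u j k :
  arrb R u j -> arrb R j k -> k != u -> arrb R u k.
Proof.
case/and4P=> _ /forall_inP Iuj _ Hu; case/and4P=> _ /forall_inP Ijk Hk _ Hku.
apply/and4P; split => //; first by rewrite eq_sym.
apply/forall_inP => x Hx; apply/implyP => xu.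
by have := Ijk x Hx; rewrite (implyP (Iuj x Hx) xu).
Qed.

Definition adjb (V : finType) (R : relation V) (u v : V) := arrb R u v || arrb R v u.

Lemma adjU (V : finType) (R : relation V) : delta_matroid R -> IM_conj R ->
  forall a b c, adjb R a b -> adjb R a c -> b = c.
Proof.
move=> DM IM a b c.
have HM := im_meet IM; have HJ := im_join IM.
case/orP=> Hab; case/orP=> Hac.
- have H1 := @arrA V R DM HM. have H2 := H1 a b c Hab. exact: H2.
- case: (eqVneq b c) => // nbc.
  have Hcb := arrC Hac Hab nbc.
  have Eba := arrA DM HM Hcb Hac.
  by move: Hab; rewrite Eba /arrb eqxx.
- case: (eqVneq b c) => // nbc.
  have Hbc := arrC Hab Hac (ltac:(by rewrite eq_sym)).
  have Eca := arrA DM HM Hbc Hab.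
  by move: Hac; rewrite Eca /arrb eqxx.
- exact: (@arrB V R DM HJ b c a Hab Hac).
Qed.

Lemma adj_sym (V : finType) (R : relation V) a b : adjb R a b = adjb R b a.
Proof. by rewrite /adjb orbC. Qed.

Lemma adj_irr (V : finType) (R : relation V) a : adjb R a a = false.
Proof. by rewrite /adjb /arrb eqxx. Qed.

Definition blk (V : finType) (R : relation V) (v : V) : {set V} :=
  [set u | (u == v) || adjb R u v].

Lemma blk_eq (V : finType) (R : relation V) : delta_matroid R -> IM_conj R ->
  forall v w, v \in blk R w -> blk R v = blk R w.
Proof.
move=> DM IM v w; rewrite inE; case: (eqVneq v w) => [->//|nvw] /= Hvw.
apply/setP => u; rewrite !inE.
case: (eqVneq u v) => [->|nuv] /=; first by rewrite Hvw orbT.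
case: (eqVneq u w) => [->|nuw] /=; first by rewrite adj_sym.
apply/idP/idP => H.
  by rewrite adj_sym in H; rewrite (adjU DM IM H Hvw) eqxx in nuw.
by rewrite adj_sym in H; rewrite adj_sym in Hvw; rewrite (adjU DM IM H Hvw) eqxx in nuv.
Qed.

Lemma blk_card (V : finType) (R : relation V) : delta_matroid R -> IM_conj R ->
  forall v, #|blk R v| <= 2.
Proof.
move=> DM IM v.
case: (pickP (fun u => adjb R u v)) => [u Hu|none].
  apply: leq_trans (_ : #|[set v; u]| <= 2); last by rewrite cards2; case: (v != u).
  apply: subset_leq_card; apply/subsetP => x; rewrite !inE.
  case/orP=> [->//|Hx]; apply/orP; right; apply/eqP.
  by rewrite adj_sym in Hx; rewrite adj_sym in Hu; exact: (adjU DM IM Hx Hu).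
apply: leq_trans (_ : #|[set v]| <= 2); last by rewrite cards1.
apply: subset_leq_card; apply/subsetP => x; rewrite !inE.
by rewrite none orbF.
Qed.

Lemma prodD (V : finType) (R : relation V) : IM_conj R -> R != set0 ->
  forall x : config V, (forall v, exists2 y, y \in R & forall k, k \in blk R v -> y k = x k) ->
  x \in R.
Proof.
move=> IM R0 x W.
have HM := im_meet IM; have HJ := im_join IM.
case/set0Pn: R0 => r0 Hr0.
have [m Hm mE] := meet_ex HM Hr0 (subxx R).
have mle y k : y \in R -> m k -> y k by move=> Hy; rewrite mE => /forall_inP; apply.
have mx k : m k -> x k.
  move=> mk; have [y Hy Ey] := W k; rewrite -(Ey k); last by rewrite inE eqxx.
  exact: mle.
have A v : x v -> exists2 a, a \in R & (a v /\ forall k, a k -> x k).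
  move=> xv; have [y Hy Ey] := W v.
  have yv : y v by rewrite Ey // inE eqxx.
  pose S := [set z in R | z v].
  have yS : y \in S by rewrite inE Hy yv.
  have SR : S \subset R by apply/subsetP => z; rewrite inE; case/andP.
  have [a Ha aE] := meet_ex HM yS SR.
  have ale z k : z \in R -> z v -> a k -> z k.
    by move=> Hz zv; rewrite aE => /forall_inP; apply; rewrite inE Hz zv.
  exists a => //; split; first by rewrite aE; apply/forall_inP => z; rewrite inE; case/andP.
  move=> k ak; case: (boolP (k \in blk R v)) => kb.
    by rewrite -(Ey k kb); apply: ale.
  case: (boolP (m k)) => mk; first exact: mx.
  have Hvk : arrb R v k.
    apply/and4P; split.
    - by apply/eqP => e; move: kb; rewrite -e inE eqxx.
    - by apply/forall_inP => z Hz; apply/implyP => zv; apply: ale.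
    - by apply/exists_inP; exists m.
    - by apply/exists_inP; exists y.
  by move: kb; rewrite inE /adjb Hvk !orbT.
pose S' := [set z in R | [forall k, z k ==> x k]].
have mS : m \in S' by rewrite inE Hm; apply/forallP => k; apply/implyP; exact: mx.
have S'R : S' \subset R by apply/subsetP => z; rewrite inE; case/andP.
have [z Hz zE] := join_ex HJ mS S'R.
suff -> : x = z by [].
apply/ffunP => k; rewrite zE; apply/idP/idP.
  move=> xk; have [a Ha [ak ax]] := A k xk; apply/exists_inP; exists a => //.
  by rewrite inE Ha; apply/forallP => k'; apply/implyP; exact: ax.
case/exists_inP => y; rewrite inE => /andP [_ /forallP H] yk; exact: (implyP (H k) yk).
Qed.

Theorem mainTheorem14 (V : finType) (R : relation V) :
  delta_matroid R -> IM_conj R -> basically_binary R.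
Proof.
move=> DM IM.
pose bl := undup [seq blk R v | v <- enum V].
pose proj (b : {set V}) : relation V :=
  [set x : config V | [exists y in R, [forall k in b, y k == x k]]].
have blkin v : blk R v \in bl by rewrite mem_undup; apply: map_f; rewrite mem_enum.
exists (((set0 : {set V}), [set x : config V | R != set0]) :: [seq (b, proj b) | b <- bl]).
split; [|split].
- move=> b; rewrite inE => /orP [/eqP -> | /mapP [b' Hb' ->]] /=.
    by split; [rewrite cards0 | move=> x y _; rewrite !inE].
  split; first by move: Hb'; rewrite mem_undup => /mapP [v _ ->]; exact: blk_card.
  move=> x y Hxy; rewrite !inE.
  apply/exists_inP/exists_inP => [][z Hz /forall_inP Hzb]; exists z => //;
    apply/forall_inP => k kb; first [by rewrite -Hxy // Hzb | by rewrite Hxy // Hzb].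
- move=> v /=; rewrite inE add0n count_map.
  rewrite (@eq_in_count _ _ (pred1 (blk R v))); first by rewrite count_uniq_mem ?undup_uniq ?blkin.
  move=> b; rewrite mem_undup => /mapP [w _ ->] /=.
  apply/idP/eqP => [H | ->]; last by rewrite inE eqxx.
  by rewrite (blk_eq DM IM H).
- move=> x; rewrite /= all_map inE; apply/idP/idP.
    move=> xR; apply/andP; split; first by apply/set0Pn; exists x.
    apply/allP => b _ /=; rewrite inE; apply/exists_inP; exists x => //.
    by apply/forall_inP => k _.
  case/andP => R0 /allP H; apply: (prodD IM R0) => v.
  have := H (blk R v) (blkin v); rewrite /= inE => /exists_inP [y Hy /forall_inP Hyk].
  by exists y => // k kb; apply/eqP; exact: Hyk.
Qed.
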